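(* Let $\Gamma=\mathbb{Z}/m_1\mathbb{Z}\times\dots\times\mathbb{Z}/m_l\mathbb{Z}$, written multiplicatively with generators $x_1,\dots,x_l$ ($x_i$ of order $m_i$), so that elements of $\mathbb{C}\Gamma$ are Laurent polynomials $P(x_1,\dots,x_l)$ reduced modulo $x_i^{m_i}=1$. Let $P\in\mathbb{C}\Gamma$ be reciprocal, let $k$ be the $l_1$-norm of its coefficients, and let $|\lambda|<1/k$. For each $i$ let $\xi_{m_i}$ be a primitive $m_i$-th root of unity. Then \[ m_\Gamma(P,\lambda)=\frac{1}{|\Gamma|}\log\left(\prod_{j_1=0}^{m_1-1}\cdots\prod_{j_l=0}^{m_l-1}\Big(1-\lambda P\big(\xi_{m_1}^{j_1},\dots,\xi_{m_l}^{j_l}\big)\Big)\right), \] where $|\Gamma|=m_1\cdots m_l$ and the logarithm of the product is the sum of the principal logarithms of its factors.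
   Context: For a group $\Gamma$ and $Q=\sum_{g\in\Gamma}c_g g\in\mathbb{C}\Gamma$ (finite sum), the reciprocal is $Q^*=\sum_g\overline{c_g}\,g^{-1}$, and $Q$ is reciprocal if $Q=Q^*$. For reciprocal $P\in\mathbb{C}\Gamma$ with $l_1$-norm $k=\sum_g|c_g|$ and $|\lambda|<1/k$, define $m_\Gamma(P,\lambda)=-\sum_{n\ge1}a_n\lambda^n/n$, where $a_n$ is the coefficient of the identity element in $P^n$. *)

(* Defs.v *)
From Stdlib Require Import Reals List Arith.
From Coquelicot Require Import Coquelicot.
Import ListNotations.
Open Scope R_scope.

(* The group Gamma = Z/m_1 x ... x Z/m_l is encoded by the list ms = [m_1;...;m_l].
   Its elements are the lists [g_1;...;g_l] of naturals with g_i < m_i,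
   g standing for x_1^{g_1} ... x_l^{g_l}. *)
Fixpoint grp_elems (ms : list nat) : list (list nat) :=
  match ms with
  | [] => [ [] ]
  | m :: ms' => flat_map (fun j => map (cons j) (grp_elems ms')) (seq 0 m)
  end.

Fixpoint grp_mul (ms : list nat) (g h : list nat) : list nat :=
  match ms, g, h with
  | m :: ms', a :: g', b :: h' => ((a + b) mod m)%nat :: grp_mul ms' g' h'
  | _, _, _ => []
  end.

Fixpoint grp_inv (ms : list nat) (g : list nat) : list nat :=
  match ms, g with
  | m :: ms', a :: g' => ((m - a) mod m)%nat :: grp_inv ms' g'
  | _, _ => []
  end.

Definition grp_one (ms : list nat) : list nat := map (fun _ => 0%nat) ms.

(* Elements of C[Gamma]: coefficient functions c : Gamma -> C
   (only values on grp_elems ms matter); Q = sum_g c(g) g. *)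
Definition Csum {A : Type} (s : list A) (f : A -> C) : C :=
  fold_right (fun a acc => Cplus (f a) acc) (RtoC 0) s.

Definition Rsum {A : Type} (s : list A) (f : A -> R) : R :=
  fold_right (fun a acc => f a + acc) 0 s.

Definition gr_mul (ms : list nat) (c d : list nat -> C) : list nat -> C :=
  fun g => Csum (grp_elems ms) (fun h => Cmult (c h) (d (grp_mul ms (grp_inv ms h) g))).

Definition gr_one (ms : list nat) : list nat -> C :=
  fun g => if list_eq_dec Nat.eq_dec g (grp_one ms) then RtoC 1 else RtoC 0.

Fixpoint gr_pow (ms : list nat) (c : list nat -> C) (n : nat) : list nat -> C :=
  match n with
  | O => gr_one ms
  | S n' => gr_mul ms c (gr_pow ms c n')
  end.

Definition reciprocal (ms : list nat) (c : list nat -> C) : Prop :=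
  forall g, In g (grp_elems ms) -> c (grp_inv ms g) = Cconj (c g).

Definition l1norm (ms : list nat) (c : list nat -> C) : R :=
  Rsum (grp_elems ms) (fun g => Cmod (c g)).

Definition coef_id (ms : list nat) (c : list nat -> C) (n : nat) : C :=
  gr_pow ms c n (grp_one ms).

(* general term of the series m_Gamma(P,lambda) = - sum_{n>=1} a_n lambda^n / n *)
Definition mGamma_term (ms : list nat) (c : list nat -> C) (lam : C) (n : nat) : C :=
  match n with
  | O => RtoC 0
  | S _ => Copp (Cdiv (Cmult (coef_id ms c n) (Cpow lam n)) (RtoC (INR n)))
  end.

Fixpoint mono (z : list C) (g : list nat) : C :=
  match z, g with
  | zi :: z', gi :: g' => Cmult (Cpow zi gi) (mono z' g')
  | _, _ => RtoC 1
  end.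

Definition gr_eval (ms : list nat) (c : list nat -> C) (z : list C) : C :=
  Csum (grp_elems ms) (fun g => Cmult (c g) (mono z g)).

Definition prim_root (m : nat) (xi : C) : Prop :=
  Cpow xi m = RtoC 1 /\ forall d : nat, (0 < d < m)%nat -> Cpow xi d <> RtoC 1.

(* principal argument in (-PI, PI] and principal logarithm *)
Definition Arg (z : C) : R :=
  let x := fst z in let y := snd z in
  if Rlt_dec 0 x then atan (y / x)
  else if Rlt_dec x 0 then
    (if Rle_dec 0 y then atan (y / x) + PI else atan (y / x) - PI)
  else if Rlt_dec 0 y then PI / 2
  else if Rlt_dec y 0 then - (PI / 2)
  else 0.

Definition Clog (z : C) : C := (ln (Cmod z), Arg z).

Fixpoint root_point (xi : list C) (j : list nat) : list C :=
  match xi, j with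
  | x :: xi', a :: j' => Cpow x a :: root_point xi' j'
  | _, _ => []
  end.

(* Main.v *)
Require Import Defs.
From Stdlib Require Import Reals List Arith Lia Lra.
From Coquelicot Require Import Coquelicot.
Import ListNotations.
Open Scope R_scope.
Open Scope C_scope.

Lemma Csum_nil {A} (f : A -> C) : Csum [] f = 0.
Proof. reflexivity. Qed.
Lemma Csum_cons {A} (a : A) l f : Csum (a :: l) f = f a + Csum l f.
Proof. reflexivity. Qed.

Lemma Csum_app {A} (l1 l2 : list A) f : Csum (l1 ++ l2) f = Csum l1 f + Csum l2 f.
Proof. induction l1; simpl. ring. unfold Csum in *. simpl. rewrite IHl1. ring. Qed.

Lemma Csum_map {A B} (g : A -> B) l f : Csum (map g l) f = Csum l (fun x => f (g x)).
Proof. induction l; simpl; auto. unfold Csum in *; simpl. now rewrite IHl. Qed.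

Lemma Csum_flat_map {A B} (g : A -> list B) l f :
  Csum (flat_map g l) f = Csum l (fun x => Csum (g x) f).
Proof. induction l; simpl; auto. rewrite Csum_app, IHl. reflexivity. Qed.

Lemma Csum_ext_in {A} (l : list A) f g : (forall x, In x l -> f x = g x) -> Csum l f = Csum l g.
Proof. induction l; simpl; intros H; auto. unfold Csum in *; simpl.
  rewrite H by auto. rewrite IHl; auto. Qed.

Lemma Csum_plus {A} (l : list A) f g : Csum l (fun x => f x + g x) = Csum l f + Csum l g.
Proof. induction l; simpl. ring. unfold Csum in *; simpl. rewrite IHl. ring. Qed.

Lemma Csum_scal_l {A} (l : list A) k f : Csum l (fun x => k * f x) = k * Csum l f.
Proof. induction l; simpl. ring. unfold Csum in *; simpl. rewrite IHl. ring. Qed.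

Lemma Csum_scal_r {A} (l : list A) k f : Csum l (fun x => f x * k) = Csum l f * k.
Proof. induction l; simpl. ring. unfold Csum in *; simpl. rewrite IHl. ring. Qed.

Lemma Csum_0 {A} (l : list A) : Csum l (fun _ => 0) = 0.
Proof. induction l; simpl. ring. unfold Csum in *; simpl. rewrite IHl. ring. Qed.

Lemma Csum_swap {A B} (l1 : list A) (l2 : list B) f :
  Csum l1 (fun x => Csum l2 (fun y => f x y)) = Csum l2 (fun y => Csum l1 (fun x => f x y)).
Proof. induction l1. simpl. now rewrite Csum_0.
  rewrite Csum_cons, IHl1, <- Csum_plus. apply Csum_ext_in. intros; reflexivity. Qed.

Lemma Csum_const {A} (l : list A) k : Csum l (fun _ => k) = RtoC (INR (length l)) * k.
Proof. induction l.
  - unfold Csum; simpl. ring.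
  - rewrite Csum_cons, IHl. change (length (a :: l)) with (S (length l)).
    rewrite S_INR, RtoC_plus. ring. Qed.

Lemma Csum_seq_S m f : Csum (seq 0 (S m)) f = Csum (seq 0 m) f + f m.
Proof. rewrite seq_S, Csum_app. rewrite Csum_cons, Csum_nil. simpl. ring. Qed.

Lemma Csum_seq_shift m f : Csum (seq 0 (S m)) f = f 0%nat + Csum (seq 0 m) (fun a => f (S a)).
Proof. simpl. rewrite <- seq_shift, Csum_map. reflexivity. Qed.

Lemma grp_elems_cons m ms f :
  Csum (grp_elems (m :: ms)) f = Csum (seq 0 m) (fun a => Csum (grp_elems ms) (fun g => f (a :: g))).
Proof. simpl. rewrite Csum_flat_map. apply Csum_ext_in. intros. now rewrite Csum_map. Qed.

Lemma grp_elems_spec ms g : In g (grp_elems ms) -> Forall2 (fun a m => (a < m)%nat) g ms.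
Proof. revert g; induction ms; simpl; intros g H.
  - destruct H as [<-|[]]. constructor.
  - apply in_flat_map in H as [j [Hj Hg]]. apply in_map_iff in Hg as [g' [<- Hg']].
    apply in_seq in Hj. constructor. lia. auto. Qed.

Lemma grp_elems_len ms g : In g (grp_elems ms) -> length g = length ms.
Proof. intros H; apply grp_elems_spec in H. eapply Forall2_length; eauto. Qed.

Lemma grp_inv_len ms h : length h = length ms -> length (grp_inv ms h) = length ms.
Proof. revert h; induction ms; destruct h; simpl; intros; try lia. f_equal. apply IHms. lia. Qed.

Lemma shift1 m b (F : nat -> C) :
  Csum (seq 0 m) (fun a => F ((b + a) mod m)%nat) = Csum (seq 0 m) F.
Proof.
  destruct m as [|m']. reflexivity.
  revert F; induction b; intros F.
  - apply Csum_ext_in. intros x Hx. apply in_seq in Hx. rewrite Nat.add_0_l, Nat.mod_small by lia. reflexivity.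
  - set (G := fun x => F ((x + 1) mod S m')%nat).
    transitivity (Csum (seq 0 (S m')) (fun a => G ((b + a) mod S m')%nat)).
    { apply Csum_ext_in. intros. unfold G. f_equal. rewrite Nat.Div0.add_mod_idemp_l by lia. f_equal. lia. }
    rewrite IHb. unfold G.

    rewrite Csum_seq_S, Csum_seq_shift.
    replace ((m' + 1) mod S m')%nat with 0%nat.
    2:{ replace (m'+1)%nat with (S m') by lia. now rewrite Nat.Div0.mod_same. }
    rewrite Cplus_comm. f_equal. apply Csum_ext_in. intros x Hx. apply in_seq in Hx.
    rewrite Nat.mod_small by lia. f_equal. lia.
Qed.

Lemma shift ms : forall h (f : list nat -> C), length h = length ms ->
  Csum (grp_elems ms) (fun g => f (grp_mul ms h g)) = Csum (grp_elems ms) f.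
Proof.
  induction ms as [|m ms IH]; intros h f Hl.
  - reflexivity.
  - destruct h as [|b h']; simpl in Hl; [lia|].
    rewrite !grp_elems_cons. simpl grp_mul.
    set (G := fun x => Csum (grp_elems ms) (fun g => f (x :: g))).
    transitivity (Csum (seq 0 m) (fun a => G ((b + a) mod m)%nat)).
    + apply Csum_ext_in. intros a _. apply (IH h' (fun g => f (((b + a) mod m)%nat :: g))). lia.
    + apply shift1.
Qed.

Lemma Cpow_1_l n : Cpow (RtoC 1) n = RtoC 1.
Proof. induction n; simpl; auto. rewrite IHn. ring. Qed.

Lemma pow_mod (z : C) m x : (0 < m)%nat -> Cpow z m = 1 -> Cpow z (x mod m) = Cpow z x.
Proof. intros Hm Hz. rewrite (Nat.div_mod_eq x m) at 2.
  rewrite Cpow_add_r, Cpow_mult_r, Hz, Cpow_1_l. ring. Qed.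

Definition charok ms z := Forall2 (fun m zi => (0 < m)%nat /\ Cpow zi m = 1) ms z.

Lemma mono_mul ms z : charok ms z -> forall g h, length g = length ms -> length h = length ms ->
  mono z (grp_mul ms g h) = mono z g * mono z h.
Proof. induction 1 as [|m zi ms z' [Hm Hz] H IH]; intros g h Hg Hh.
  - simpl. ring.
  - destruct g as [|a g]; destruct h as [|b h]; simpl in *; try lia.
    rewrite pow_mod by auto. rewrite Cpow_add_r, IH by lia. ring. Qed.

Lemma mono_inv ms z : charok ms z -> forall h, Forall2 (fun a m => (a < m)%nat) h ms ->
  mono z (grp_inv ms h) * mono z h = 1.
Proof. induction 1 as [|m zi ms z' [Hm Hz] H IH]; intros h Hh.
  - simpl. destruct h; simpl; ring.
  - inversion Hh as [|a m' h' ms' Ha Hh']; subst. simpl.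
    rewrite pow_mod by auto.
    transitivity ((Cpow zi (m - a) * Cpow zi a) * (mono z' (grp_inv ms h') * mono z' h')). ring.
    rewrite IH by auto. rewrite <- Cpow_add_r. replace (m - a + a)%nat with m by lia. rewrite Hz. ring. Qed.

Lemma mono_one ms z : mono z (grp_one ms) = 1.
Proof. revert z; induction ms; intros z; destruct z; simpl; auto. rewrite IHms. ring. Qed.

Lemma gr_one_cons m ms a g : gr_one (m :: ms) (a :: g) = (if Nat.eq_dec a 0 then 1 else 0) * gr_one ms g.
Proof. unfold gr_one. simpl grp_one.
  destruct (list_eq_dec Nat.eq_dec (a :: g) (0%nat :: grp_one ms)) as [E|E];
  destruct (Nat.eq_dec a 0) as [Ea|Ea];
  destruct (list_eq_dec Nat.eq_dec g (grp_one ms)) as [E2|E2]; try ring; exfalso; congruence.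
Qed.

Lemma gr_one_sum ms : List.Forall (fun m => (0 < m)%nat) ms -> forall f,
  Csum (grp_elems ms) (fun g => gr_one ms g * f g) = f (grp_one ms).
Proof. induction 1 as [|m ms Hm H IH]; intros f.
  - simpl. unfold gr_one. simpl. unfold Csum; simpl. ring.
  - rewrite grp_elems_cons.
    transitivity (Csum (seq 0 m) (fun a => (if Nat.eq_dec a 0 then 1 else 0) * f (a :: grp_one ms))).
    + apply Csum_ext_in; intros a _.
      transitivity ((if Nat.eq_dec a 0 then 1 else 0) * Csum (grp_elems ms) (fun g => gr_one ms g * f (a :: g))).
      * rewrite <- Csum_scal_l. apply Csum_ext_in; intros g _. rewrite gr_one_cons. ring.
      * rewrite IH. reflexivity.
    + destruct m as [|m']; [lia|]. rewrite Csum_seq_shift. simpl.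
      rewrite (Csum_ext_in _ _ (fun _ => 0)). rewrite Csum_0. ring.
      intros x _. destruct (Nat.eq_dec (S x) 0); [lia|]. ring.
Qed.

Lemma eval_mul ms z c d : charok ms z ->
  gr_eval ms (gr_mul ms c d) z = gr_eval ms c z * gr_eval ms d z.
Proof. intros Hz. unfold gr_eval, gr_mul.
  rewrite <- Csum_scal_r.
  transitivity (Csum (grp_elems ms) (fun h => Csum (grp_elems ms) (fun g => c h * d (grp_mul ms (grp_inv ms h) g) * mono z g))).
  { rewrite Csum_swap. apply Csum_ext_in; intros g _. rewrite <- Csum_scal_r. reflexivity. }
  apply Csum_ext_in; intros h Hh.
  pose proof (grp_elems_spec _ _ Hh) as Hs. pose proof (grp_elems_len _ _ Hh) as Hl.
  transitivity (c h * mono z h * Csum (grp_elems ms) (fun g => (fun k => d k * mono z k) (grp_mul ms (grp_inv ms h) g))).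
  - rewrite <- Csum_scal_l. apply Csum_ext_in; intros g Hg. pose proof (grp_elems_len _ _ Hg).
    rewrite (mono_mul ms z Hz) by (try apply grp_inv_len; auto).
    transitivity (c h * d (grp_mul ms (grp_inv ms h) g) * (mono z (grp_inv ms h) * mono z h) * mono z g).
    { rewrite (mono_inv ms z Hz h Hs). ring. } ring.
  - rewrite (shift ms (grp_inv ms h) (fun k => d k * mono z k)) by (apply grp_inv_len; auto). ring.
Qed.

Lemma eval_pow ms z c n : charok ms z -> List.Forall (fun m => (0 < m)%nat) ms ->
  gr_eval ms (gr_pow ms c n) z = Cpow (gr_eval ms c z) n.
Proof. intros Hz Hm. induction n; simpl.
  - unfold gr_eval. rewrite gr_one_sum by auto. apply mono_one.
  - rewrite eval_mul by auto. rewrite IHn. reflexivity.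
Qed.

Lemma geom_fin y m : Csum (seq 0 m) (fun a => Cpow y a) * (1 - y) = 1 - Cpow y m.
Proof. induction m. simpl. unfold Csum; simpl. ring.
  rewrite Csum_seq_S. 
  transitivity (Csum (seq 0 m) (fun a => Cpow y a) * (1 - y) + Cpow y m * (1 - y)). ring.
  rewrite IHm. simpl. ring. Qed.

Lemma RtoC_neq0 r : r <> 0%R -> RtoC r <> RtoC 0.
Proof. intros H E. apply H. injection E. auto. Qed.

Lemma G_zero x m b : prim_root m x -> (0 < b < m)%nat ->
  Csum (seq 0 m) (fun a => Cpow (Cpow x a) b) = 0.
Proof. intros [Hx Hp] Hb.
  set (y := Cpow x b).
  assert (Hy : y <> 1) by (apply Hp; auto).
  assert (E : Csum (seq 0 m) (fun a => Cpow (Cpow x a) b) = Csum (seq 0 m) (fun a => Cpow y a)).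
  { apply Csum_ext_in; intros. unfold y. rewrite <- !Cpow_mult_r. f_equal. lia. }
  rewrite E.
  assert (Hym : Cpow y m = 1). { unfold y. rewrite <- Cpow_mult_r, Nat.mul_comm, Cpow_mult_r, Hx. apply Cpow_1_l. }
  assert (H1 : 1 - y <> 0). { intros H. apply Hy. 
    transitivity (y + (1 - y)). rewrite H. ring. ring. }
  transitivity (Csum (seq 0 m) (fun a => Cpow y a) * (1 - y) * / (1 - y)).
  field. auto. rewrite geom_fin, Hym. ring. Qed.

Lemma prod_pos ms : List.Forall (fun m => (0 < m)%nat) ms -> (0 < fold_right Nat.mul 1%nat ms)%nat.
Proof. induction 1; simpl; auto. apply Nat.mul_pos_pos; auto. Qed.

Lemma charsum ms xi : List.Forall (fun m => (0 < m)%nat) ms -> Forall2 prim_root ms xi ->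
  forall f, Csum (grp_elems ms) (fun g => f g * Csum (grp_elems ms) (fun j => mono (root_point xi j) g))
  = RtoC (INR (fold_right Nat.mul 1%nat ms)) * f (grp_one ms).
Proof. intros Hm H. induction H as [|m x ms xi Hx H IH]; intros f.
  - simpl. unfold Csum; simpl. ring.
  - inversion Hm as [|m' ms' Hm0 Hm1]; subst. specialize (IH Hm1).
    rewrite grp_elems_cons.
    transitivity (Csum (seq 0 m) (fun b => Csum (seq 0 m) (fun a => Cpow (Cpow x a) b) *
       Csum (grp_elems ms) (fun g => f (b :: g) * Csum (grp_elems ms) (fun j => mono (root_point xi j) g)))).
    { apply Csum_ext_in; intros b _. rewrite <- Csum_scal_l. apply Csum_ext_in; intros g _.
      rewrite grp_elems_cons.
      transitivity (f (b :: g) * (Csum (seq 0 m) (fun a => Cpow (Cpow x a) b) * Csum (grp_elems ms) (fun j => mono (root_point xi j) g))).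
      2: ring. f_equal. rewrite <- Csum_scal_r. apply Csum_ext_in; intros a _.
      rewrite <- Csum_scal_l. apply Csum_ext_in; intros j _. reflexivity. }
    transitivity (Csum (seq 0 m) (fun b => Csum (seq 0 m) (fun a => Cpow (Cpow x a) b) *
       (RtoC (INR (fold_right Nat.mul 1%nat ms)) * f (b :: grp_one ms)))).
    { apply Csum_ext_in; intros b _. f_equal. apply (IH (fun g => f (b :: g))). }
    destruct m as [|m']; [lia|]. rewrite Csum_seq_shift.
    rewrite (Csum_ext_in (seq 0 m') _ (fun _ => 0)).
    2:{ intros b Hb. apply in_seq in Hb. rewrite G_zero; auto. ring. lia. }
    rewrite Csum_0.
    rewrite (Csum_ext_in _ _ (fun _ => 1)). 2:{ intros; reflexivity. }
    rewrite Csum_const, length_seq. simpl fold_right. simpl grp_one.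
    replace (fold_right Nat.mul 1%nat ms + m' * fold_right Nat.mul 1%nat ms)%nat with (S m' * fold_right Nat.mul 1%nat ms)%nat by lia.
    rewrite mult_INR, RtoC_mult. ring.
Qed.

Lemma inversion ms xi d : List.Forall (fun m => (0 < m)%nat) ms -> Forall2 prim_root ms xi ->
  Csum (grp_elems ms) (fun j => gr_eval ms d (root_point xi j)) = RtoC (INR (fold_right Nat.mul 1%nat ms)) * d (grp_one ms).
Proof. intros Hm H. unfold gr_eval. rewrite Csum_swap. rewrite <- (charsum ms xi Hm H d).
  apply Csum_ext_in; intros g _. rewrite Csum_scal_l. reflexivity. Qed.

Lemma rp_charok ms xi : List.Forall (fun m => (0 < m)%nat) ms -> Forall2 prim_root ms xi ->
  forall j, Forall2 (fun a m => (a < m)%nat) j ms -> charok ms (root_point xi j).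
Proof. intros Hm H. induction H as [|m x ms xi [Hx _] H IH]; intros j Hj.
  - inversion Hj. constructor.
  - inversion Hm; subst. inversion Hj; subst. simpl. constructor; auto.
    split; auto. rewrite <- Cpow_mult_r, Nat.mul_comm, Cpow_mult_r, Hx. apply Cpow_1_l.
    apply IH; auto.
Qed.

Lemma coef_formula ms xi c n : List.Forall (fun m => (0 < m)%nat) ms -> Forall2 prim_root ms xi ->
  coef_id ms c n = / RtoC (INR (fold_right Nat.mul 1%nat ms)) *
     Csum (grp_elems ms) (fun j => Cpow (gr_eval ms c (root_point xi j)) n).
Proof. intros Hm H.
  assert (HN : RtoC (INR (fold_right Nat.mul 1%nat ms)) <> RtoC 0).
  { apply RtoC_neq0. apply not_0_INR. pose proof (prod_pos ms Hm). lia. }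
  rewrite (Csum_ext_in _ _ (fun j => gr_eval ms (gr_pow ms c n) (root_point xi j))).
  2:{ intros j Hj. rewrite eval_pow; auto. apply rp_charok; auto. apply grp_elems_spec; auto. }
  rewrite inversion by auto. unfold coef_id. field. auto. Qed.

Close Scope C_scope.
Open Scope R_scope.

Lemma sum_n_fst (u : nat -> C) n : fst (sum_n u n) = sum_n (fun k => fst (u k)) n.
Proof. induction n. rewrite !sum_O. reflexivity. rewrite !sum_Sn, <- IHn. reflexivity. Qed.
Lemma sum_n_snd (u : nat -> C) n : snd (sum_n u n) = sum_n (fun k => snd (u k)) n.
Proof. induction n. rewrite !sum_O. reflexivity. rewrite !sum_Sn, <- IHn. reflexivity. Qed.

Lemma sqrt2_lt2 : sqrt 2 < 2.
Proof. rewrite <- (sqrt_square 2) at 2 by lra. apply sqrt_lt_1; lra. Qed.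

Lemma series_C_of_comp (u : nat -> C) (l : C) :
  is_series (fun n => fst (u n)) (fst l) -> is_series (fun n => snd (u n)) (snd l) -> is_series u l.
Proof. unfold is_series. intros H1 H2.
  apply filterlim_locally_ball_norm. intros eps.
  assert (He : 0 < eps / 2) by (destruct eps; simpl; lra).
  apply filterlim_locally_ball_norm with (eps := mkposreal _ He) in H1.
  apply filterlim_locally_ball_norm with (eps := mkposreal _ He) in H2.
  generalize (filter_and _ _ H1 H2). apply filter_imp. intros n [A B].
  unfold ball_norm in *. simpl in A, B.
  change (norm (minus (sum_n u n) l)) with (Cmod (Cminus (sum_n u n) l)).
  change (norm (minus (sum_n (fun n0 : nat => fst (u n0)) n) (fst l))) with (Rabs (sum_n (fun n0 : nat => fst (u n0)) n - fst l)) in A.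
  change (norm (minus (sum_n (fun n0 : nat => snd (u n0)) n) (snd l))) with (Rabs (sum_n (fun n0 : nat => snd (u n0)) n - snd l)) in B.
  rewrite <- sum_n_fst in A. rewrite <- sum_n_snd in B.
  remember (sum_n u n) as S.
  eapply Rle_lt_trans. apply Cmod_2Rmax. simpl.
  assert (Rmax (Rabs (fst S + - fst l)) (Rabs (snd S + - snd l)) < eps/2).
  { apply Rmax_lub_lt; assumption. }
  pose proof sqrt2_lt2. pose proof (sqrt_pos 2).
  pose proof (Rmax_l (Rabs (fst S + - fst l)) (Rabs (snd S + - snd l))).
  pose proof (Rabs_pos (fst S + - fst l)).
  nra.
Qed.

Lemma series_fst (u : nat -> C) (l : C) : is_series u l -> is_series (fun n => fst (u n)) (fst l).
Proof. unfold is_series. intros H.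
  apply filterlim_locally_ball_norm. intros eps.
  apply filterlim_locally_ball_norm with (eps := eps) in H.
  revert H. apply filter_imp. intros n A. unfold ball_norm in *.
  change (norm (minus (sum_n u n) l)) with (Cmod (Cminus (sum_n u n) l)) in A.
  change (norm (minus (sum_n (fun n0 : nat => fst (u n0)) n) (fst l))) with (Rabs (sum_n (fun n0 : nat => fst (u n0)) n - fst l)).
  rewrite <- sum_n_fst. eapply Rle_lt_trans. 2: apply A.
  eapply Rle_trans. 2: apply Rmax_Cmod. apply Rmax_l.
Qed.

Lemma series_snd (u : nat -> C) (l : C) : is_series u l -> is_series (fun n => snd (u n)) (snd l).
Proof. unfold is_series. intros H.
  apply filterlim_locally_ball_norm. intros eps.
  apply filterlim_locally_ball_norm with (eps := eps) in H.
  revert H. apply filter_imp. intros n A. unfold ball_norm in *.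
  change (norm (minus (sum_n u n) l)) with (Cmod (Cminus (sum_n u n) l)) in A.
  change (norm (minus (sum_n (fun n0 : nat => snd (u n0)) n) (snd l))) with (Rabs (sum_n (fun n0 : nat => snd (u n0)) n - snd l)).
  rewrite <- sum_n_snd. eapply Rle_lt_trans. 2: apply A.
  eapply Rle_trans. 2: apply Rmax_Cmod. apply Rmax_r.
Qed.

Lemma Cgeom (z : C) : Cmod z < 1 -> is_series (fun n => Cpow z n) (Cinv (Cminus (RtoC 1) z)).
Proof. intros Hz.
  assert (Hz1 : Cminus (RtoC 1) z <> RtoC 0).
  { intros E. assert (z = RtoC 1). { transitivity (Cminus (RtoC 1) (Cminus (RtoC 1) z)). ring. rewrite E. ring. }
    subst. rewrite Cmod_1 in Hz. lra. }
  assert (HS : forall n, sum_n (fun n => Cpow z n) n = Cmult (Cminus (RtoC 1) (Cpow z (S n))) (Cinv (Cminus (RtoC 1) z))).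
  { induction n. rewrite sum_O. simpl. field. auto.
    rewrite sum_Sn, IHn. change (plus ?a ?b) with (Cplus a b). simpl. field. auto. }
  unfold is_series. apply filterlim_locally_ball_norm. intros eps.
  assert (Hc : 0 < Cmod (Cminus (RtoC 1) z)) by (apply Cmod_gt_0; auto).
  assert (He : 0 < eps * Cmod (Cminus (RtoC 1) z)) by (destruct eps; simpl; nra).
  pose proof (is_lim_seq_geom (Cmod z)) as G.
  rewrite Rabs_pos_eq in G by apply Cmod_ge_0.
  specialize (G Hz). apply is_lim_seq_spec in G. specialize (G (mkposreal _ He)).
  revert G. apply filter_imp. intros n A. simpl in A. unfold ball_norm.
  change (norm (minus (sum_n (fun n0 : nat => Cpow z n0) n) (Cinv (Cminus (RtoC 1) z))))
    with (Cmod (Cminus (sum_n (fun n0 : nat => Cpow z n0) n) (Cinv (Cminus (RtoC 1) z)))).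
  rewrite HS.
  replace (Cminus (Cmult (Cminus (RtoC 1) (Cpow z (S n))) (Cinv (Cminus (RtoC 1) z))) (Cinv (Cminus (RtoC 1) z)))
    with (Cmult (Copp (Cmult z (Cpow z n))) (Cinv (Cminus (RtoC 1) z))) by (simpl; field; auto).
  rewrite Cmod_mult, Cmod_opp, Cmod_mult, Cmod_pow, Cmod_inv by auto.
  rewrite Rminus_0_r, Rabs_pos_eq in A by (apply pow_le; apply Cmod_ge_0).
  pose proof (Cmod_ge_0 z).
  apply Rmult_lt_reg_r with (Cmod (Cminus (RtoC 1) z)); auto.
  rewrite Rmult_assoc, Rinv_l by lra. 
  assert (Cmod z * Cmod z ^ n <= Cmod z ^ n). { pose proof (pow_le (Cmod z) n H). nra. }
  lra.
Qed.

Definition gam (p : C -> R) (w : C) (n : nat) : R :=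
  match n with O => 0 | S _ => - p (Cpow w n) / INR n end.

Lemma gam_radius (p : C -> R) (w : C) : (forall z, Rabs (p z) <= Cmod z) -> Cmod w < 1 ->
  Rbar_le (Finite (2 / (1 + Cmod w))) (CV_radius (gam p w)).
Proof. intros Hp Hw. destruct (CV_radius_bounded (gam p w)) as [Hub _]. apply Hub.
  pose proof (Cmod_ge_0 w) as Hw0.
  set (r := 2 / (1 + Cmod w)).
  assert (Hr0 : 0 < r) by (unfold r; apply Rdiv_lt_0_compat; lra).
  assert (Hr1 : Cmod w * r < 1).
  { unfold r. apply Rmult_lt_reg_r with (1 + Cmod w). lra. field_simplify; lra. }
  exists 1. intros [|n].
  - simpl. rewrite Rmult_0_l, Rabs_R0. lra.
  - unfold gam. 
    assert (HN : 1 <= INR (S n)) by (apply (le_INR 1); lia).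
    rewrite Rabs_mult, (Rabs_pos_eq (r ^ S n)) by (apply pow_le; lra).
    unfold Rdiv. rewrite Rabs_mult, Rabs_Ropp, (Rabs_pos_eq (/ INR (S n))) by (apply Rlt_le, Rinv_0_lt_compat; lra).
    assert (H1 : Rabs (p (Cpow w (S n))) <= Cmod w ^ S n) by (rewrite <- Cmod_pow; apply Hp).
    assert (H2 : / INR (S n) <= 1). { rewrite <- Rinv_1. apply Rinv_le_contravar; lra. }
    assert (H3 : 0 <= / INR (S n)) by (apply Rlt_le, Rinv_0_lt_compat; lra).
    assert (H4 : (Cmod w * r) ^ S n < 1) by (apply pow_lt_1_compat; [split; nra | lia]).
    rewrite Rpow_mult_distr in H4.
    pose proof (pow_le r (S n) (Rlt_le _ _ Hr0)).
    pose proof (Rabs_pos (p (Cpow w (S n)))).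
    assert (Rabs (p (Cpow w (S n))) * / INR (S n) <= Cmod w ^ S n) by nra.
    nra.
Qed.

Lemma dseries (p : C -> R) (w : C) (t : R) :
  (forall u l, is_series u l -> is_series (fun n => p (u n)) (p l)) ->
  (forall r z, p (Cmult (RtoC r) z) = r * p z) ->
  (forall z, p (Copp z) = - p z) ->
  Rabs t * Cmod w < 1 ->
  PSeries (PS_derive (gam p w)) t = p (Cmult (Copp w) (Cinv (Cminus (RtoC 1) (Cmult (RtoC t) w)))).
Proof. intros Hp2 Hp3 Hp4 Ht. unfold PSeries. apply is_series_unique.
  assert (G : Cmod (Cmult (RtoC t) w) < 1) by (rewrite Cmod_mult, Cmod_R; auto).
  apply Cgeom in G.
  apply (@is_series_scal C_AbsRing C_NormedModule (Copp w)) in G.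
  apply Hp2 in G. revert G. apply is_series_ext. intros k.
  change (scal (Copp w) (Cpow (Cmult (RtoC t) w) k)) with (Cmult (Copp w) (Cpow (Cmult (RtoC t) w) k)).
  replace (Cmult (Copp w) (Cpow (Cmult (RtoC t) w) k)) with (Cmult (RtoC (t^k)) (Copp (Cpow w (S k)))).
  2:{ rewrite Cpow_mult_l, RtoC_pow. simpl. ring. }
  match goal with |- ?a = ?b => change (@eq R a b) end.
  rewrite Hp3, Hp4. unfold PS_derive, gam. field. apply not_0_INR. lia.
Qed.

Lemma is_derive_eq (f : R -> R) x l l' : l = l' -> is_derive f x l -> is_derive f x l'.
Proof. intros ->; auto. Qed.

Lemma gam_series (p : C -> R) (w : C) (F : R -> R) :
  (forall z, Rabs (p z) <= Cmod z) ->
  (forall u l, is_series u l -> is_series (fun n => p (u n)) (p l)) ->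
  (forall r z, p (Cmult (RtoC r) z) = r * p z) ->
  (forall z, p (Copp z) = - p z) ->
  Cmod w < 1 -> F 0 = 0 ->
  (forall t, 0 <= t <= 1 -> is_derive F t (p (Cmult (Copp w) (Cinv (Cminus (RtoC 1) (Cmult (RtoC t) w)))))) ->
  is_series (gam p w) (F 1).
Proof. intros Hp1 Hp2 Hp3 Hp4 Hw HF0 HF.
  pose proof (gam_radius p w Hp1 Hw) as Hrad.
  pose proof (Cmod_ge_0 w) as Hw0.
  assert (Hr : 1 < 2 / (1 + Cmod w)).
  { apply Rmult_lt_reg_r with (1 + Cmod w). lra. field_simplify; lra. }
  assert (Hin : forall t, 0 <= t <= 1 -> Rbar_lt (Rabs t) (CV_radius (gam p w))).
  { intros t Ht. eapply Rbar_lt_le_trans; [|apply Hrad]. simpl. rewrite Rabs_pos_eq by lra. lra. }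
  assert (Heq : PSeries (gam p w) 1 = F 1).
  { assert (E : (fun t => PSeries (gam p w) t - F t) 0 = (fun t => PSeries (gam p w) t - F t) 1).
    { apply (eq_is_derive (fun t => PSeries (gam p w) t - F t) 0 1); [|lra]. intros t Ht.
      apply (is_derive_eq _ _ (PSeries (PS_derive (gam p w)) t - p (Cmult (Copp w) (Cinv (Cminus (RtoC 1) (Cmult (RtoC t) w)))))).
      - rewrite dseries; auto. change (@zero R_NormedModule) with 0. change (@eq R (p (Cmult (Copp w) (Cinv (Cminus (RtoC 1) (Cmult (RtoC t) w)))) - p (Cmult (Copp w) (Cinv (Cminus (RtoC 1) (Cmult (RtoC t) w))))) 0). ring.
        rewrite Rabs_pos_eq by lra. nra.
      - apply (is_derive_minus (PSeries (gam p w)) F). apply is_derive_PSeries; auto. auto. }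
    simpl in E. rewrite PSeries_0, HF0 in E. unfold gam at 1 in E. lra. }
  rewrite <- Heq.
  assert (Hex : ex_pseries (gam p w) 1) by (apply CV_radius_inside, Hin; lra).
  apply PSeries_correct in Hex. unfold is_pseries in Hex. revert Hex. apply is_series_ext.
  intros n. rewrite pow_n_pow, pow1. change (@eq R (1 * gam p w n) (gam p w n)). ring.
Qed.

Lemma deriv_U (a b t : R) : 0 < 1 - t * a ->
  is_derive (fun t => ln ((1 - t * a) ^ 2 + (t * b) ^ 2) / 2) t
    (fst (Cmult (Copp (a, b)) (Cinv (Cminus (RtoC 1) (Cmult (RtoC t) (a, b)))))).
Proof. intros H.
  assert (HD : 0 < (1 - t * a) ^ 2 + (t * b) ^ 2) by nra.
  auto_derive. lra.
  unfold Cmult, Copp, Cinv, Cminus, Cplus, RtoC. simpl. field. nra.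
Qed.

Lemma deriv_V (a b t : R) : 0 < 1 - t * a ->
  is_derive (fun t => atan (- (t * b) / (1 - t * a))) t
    (snd (Cmult (Copp (a, b)) (Cinv (Cminus (RtoC 1) (Cmult (RtoC t) (a, b)))))).
Proof. intros H.
  assert (HD : 0 < (1 - t * a) ^ 2 + (t * b) ^ 2) by nra.
  auto_derive. lra.
  unfold Cmult, Copp, Cinv, Cminus, Cplus, RtoC. simpl. field. nra.
Qed.

Definition Lterm (w : C) (n : nat) : C :=
  match n with O => RtoC 0 | S _ => Copp (Cdiv (Cpow w n) (RtoC (INR n))) end.

Lemma ln_sqrt' x : 0 < x -> ln (sqrt x) = ln x / 2.
Proof. intros H. assert (Hs : 0 < sqrt x) by (apply sqrt_lt_R0; auto).
  assert (E : ln x = ln (sqrt x) + ln (sqrt x)).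
  { rewrite <- ln_mult by auto. rewrite sqrt_sqrt by lra. reflexivity. }
  rewrite E. field. Qed.

Lemma log_series (w : C) : Cmod w < 1 -> is_series (Lterm w) (Clog (Cminus (RtoC 1) w)).
Proof. intros Hw.
  assert (Ha : Rabs (fst w) < 1).
  { eapply Rle_lt_trans; [|apply Hw]. eapply Rle_trans; [|apply Rmax_Cmod]. apply Rmax_l. }
  apply series_C_of_comp.
  - apply (is_series_ext (gam fst w)).
    { intros [|n]. reflexivity. unfold gam, Lterm. rewrite S_INR. pose proof (pos_INR n).
      destruct (Cpow w (S n)) as [x y]. unfold Cdiv, Cinv, Cmult, Copp, RtoC. simpl. field.
      lra. }
    destruct w as [a b]. simpl in Ha.
    replace (fst (Clog (Cminus (RtoC 1) (a, b)))) with ((fun t => ln ((1 - t * a) ^ 2 + (t * b) ^ 2) / 2) 1).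
    apply (gam_series fst (a, b) (fun t => ln ((1 - t * a) ^ 2 + (t * b) ^ 2) / 2)); auto.
    + intros z. eapply Rle_trans; [|apply Rmax_Cmod]. apply Rmax_l.
    + intros u l Hs. exact (series_fst u l Hs).
    + intros r [x y]. simpl. ring.
    + replace ((1 - 0 * a) ^ 2 + (0 * b) ^ 2) with 1 by ring. rewrite ln_1. field.
    + intros t Ht. apply deriv_U. apply Rabs_lt_between in Ha. nra.
    + simpl. unfold Cmod. simpl. rewrite ln_sqrt'. f_equal. f_equal; ring.
      apply Rabs_lt_between in Ha. nra.
  - apply (is_series_ext (gam snd w)).
    { intros [|n]. reflexivity. unfold gam, Lterm. rewrite S_INR. pose proof (pos_INR n).
      destruct (Cpow w (S n)) as [x y]. unfold Cdiv, Cinv, Cmult, Copp, RtoC. simpl. field.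
      lra. }
    destruct w as [a b]. simpl in Ha.
    replace (snd (Clog (Cminus (RtoC 1) (a, b)))) with ((fun t => atan (- (t * b) / (1 - t * a))) 1).
    apply (gam_series snd (a, b) (fun t => atan (- (t * b) / (1 - t * a)))); auto.
    + intros z. eapply Rle_trans; [|apply Rmax_Cmod]. apply Rmax_r.
    + intros u l Hs. exact (series_snd u l Hs).
    + intros r [x y]. simpl. ring.
    + simpl. replace (- (0 * b) / (1 - 0 * a)) with 0 by field. apply atan_0.
    + intros t Ht. apply deriv_V. apply Rabs_lt_between in Ha. nra.
    + simpl. unfold Arg. simpl. apply Rabs_lt_between in Ha.
      destruct (Rlt_dec 0 (1 + - a)); [|lra]. f_equal. field. lra.
Qed.

Lemma is_series_C0 : is_series (fun _ : nat => RtoC 0) (RtoC 0).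
Proof.
  assert (H : Cmod (RtoC 0) < 1) by (rewrite Cmod_0; lra).
  apply Cgeom in H. apply (@is_series_scal C_AbsRing C_NormedModule (RtoC 0)) in H.
  change (scal (RtoC 0) (Cinv (Cminus (RtoC 1) (RtoC 0)))) with (Cmult (RtoC 0) (Cinv (Cminus (RtoC 1) (RtoC 0)))) in H.
  replace (Cmult (RtoC 0) (Cinv (Cminus (RtoC 1) (RtoC 0)))) with (RtoC 0) in H by ring.
  revert H. apply is_series_ext. intros n. change (Cmult (RtoC 0) (Cpow (RtoC 0) n) = RtoC 0). ring.
Qed.

Lemma is_series_Csum {A} (s : list A) (f : A -> nat -> C) (l : A -> C) :
  (forall j, In j s -> is_series (f j) (l j)) ->
  is_series (fun n => Csum s (fun j => f j n)) (Csum s l).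
Proof. induction s as [|a s IH]; intros H.
  - apply is_series_C0.
  - assert (H1 := H a (or_introl eq_refl)).
    assert (H2 := IH (fun j Hj => H j (or_intror Hj))).
    pose proof (@is_series_plus C_AbsRing C_NormedModule _ _ _ _ H1 H2) as H3.
    exact H3.
Qed.

Lemma Cmod_Csum_le {A} (s : list A) (f : A -> C) : Cmod (Csum s f) <= Rsum s (fun x => Cmod (f x)).
Proof. induction s; simpl. rewrite Cmod_0. lra.
  unfold Csum in *; simpl. eapply Rle_trans. apply Cmod_triangle. unfold Rsum; simpl. fold (Rsum s (fun x => Cmod (f x))). lra. Qed.

Lemma Rsum_le {A} (s : list A) (f g : A -> R) : (forall x, f x <= g x) -> Rsum s f <= Rsum s g.
Proof. intros H; induction s; simpl. lra. unfold Rsum in *; simpl. specialize (H a). lra. Qed.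

Lemma Cmod_mono z g : List.Forall (fun x => Cmod x = 1) z -> Cmod (mono z g) = 1.
Proof. intros H; revert g; induction H; intros g; destruct g; simpl; try apply Cmod_1.
  rewrite Cmod_mult, Cmod_pow, H, pow1, IHForall. ring. Qed.

Lemma Cmod_rp xi j : List.Forall (fun x => Cmod x = 1) xi -> List.Forall (fun x => Cmod x = 1) (root_point xi j).
Proof. intros H; revert j; induction H; intros j; destruct j; simpl; constructor; auto.
  rewrite Cmod_pow, H, pow1. auto. Qed.

Lemma Cmod_prim ms xi : List.Forall (fun m => (0 < m)%nat) ms -> Forall2 prim_root ms xi ->
  List.Forall (fun x => Cmod x = 1) xi.
Proof. intros Hm H; induction H as [|m x ms xi [Hx _] H IH]; constructor.
  - inversion Hm; subst. assert (E : Cmod x ^ m = 1) by (rewrite <- Cmod_pow, Hx; apply Cmod_1).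
    pose proof (Cmod_ge_0 x).
    destruct (Rtotal_order (Cmod x) 1) as [L|[L|L]]; auto.
    + pose proof (pow_lt_1_compat (Cmod x) m (conj H0 L) H2). lra.
    + pose proof (Rlt_pow_R1 (Cmod x) m L H2). lra.
  - inversion Hm; auto.
Qed.

Theorem corollary6p1 (ms : list nat) (xi : list C) (c : list nat -> C) (lam : C) :
  List.Forall (fun m => (0 < m)%nat) ms ->
  length xi = length ms ->
  List.Forall2 prim_root ms xi ->
  reciprocal ms c ->
  Cmod lam * l1norm ms c < 1 ->
  @is_series C_AbsRing C_NormedModule (mGamma_term ms c lam)
    (Cmult (Cinv (RtoC (INR (fold_right Nat.mul 1%nat ms))))
       (Csum (grp_elems ms)
          (fun j => Clog (Cminus (RtoC 1)
                        (Cmult lam (gr_eval ms c (root_point xi j))))))).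
Proof.
  intros Hm Hlen Hp Hrec Hk.
  assert (HN : RtoC (INR (fold_right Nat.mul 1%nat ms)) <> RtoC 0).
  { apply RtoC_neq0. apply not_0_INR. pose proof (prod_pos ms Hm). lia. }
  assert (Hxi := Cmod_prim ms xi Hm Hp).
  assert (Hmod : forall j, In j (grp_elems ms) -> Cmod (Cmult lam (gr_eval ms c (root_point xi j))) < 1).
  { intros j _. rewrite Cmod_mult. eapply Rle_lt_trans; [|apply Hk].
    apply Rmult_le_compat_l. apply Cmod_ge_0.
    unfold gr_eval, l1norm. eapply Rle_trans. apply Cmod_Csum_le.
    apply Rsum_le. intros g. rewrite Cmod_mult, Cmod_mono. lra. apply Cmod_rp; auto. }
  pose proof (is_series_Csum (grp_elems ms) (fun j => Lterm (Cmult lam (gr_eval ms c (root_point xi j))))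
     (fun j => Clog (Cminus (RtoC 1) (Cmult lam (gr_eval ms c (root_point xi j)))))) as HS.
  assert (HS' := HS (fun j Hj => log_series _ (Hmod j Hj))). clear HS.
  apply (@is_series_scal C_AbsRing C_NormedModule (Cinv (RtoC (INR (fold_right Nat.mul 1%nat ms))))) in HS'.
  revert HS'. apply is_series_ext. intros n.
  change (scal ?a ?b) with (Cmult a b).
  destruct n as [|k].
  - unfold Lterm. rewrite Csum_0. simpl. ring.
  - unfold mGamma_term. rewrite (coef_formula ms xi c (S k) Hm Hp).
    assert (HD : RtoC (INR (S k)) <> RtoC 0) by (apply RtoC_neq0, not_0_INR; lia).
    rewrite (Csum_ext_in _ _ (fun j => Cmult (Copp (Cdiv (Cpow lam (S k)) (RtoC (INR (S k)))))
                                         (Cpow (gr_eval ms c (root_point xi j)) (S k)))).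
    2:{ intros j _. unfold Lterm. rewrite Cpow_mult_l. unfold Cdiv. match goal with |- ?a = ?b => change (@eq C a b) end. ring. }
    rewrite Csum_scal_l. unfold Cdiv. match goal with |- ?a = ?b => change (@eq C a b) end. field. split; auto.
Qed.
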